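(* Let $SA_{106} = 224{,}403{,}121{,}196{,}654{,}400$, $SA_{107} = 448{,}806{,}242{,}393{,}308{,}800$ and $N_{15} = 614{,}889{,}782{,}588{,}491{,}410$. The only integers $n$ in the open interval $(SA_{107}, N_{15})$ satisfying \[ \frac{\sigma(n)}{n} > \frac{\sigma(SA_{106})}{SA_{106}} \] are $n_1 = 497{,}325{,}836{,}165{,}558{,}400$ and $n_2 = 521{,}585{,}633{,}051{,}683{,}200$.
   Context: $\sigma(n)$ is the sum of the positive divisors of $n$. $SA_{106}$ and $SA_{107}$ are the $106$th and $107$th superabundant numbers (a positive integer $N$ is superabundant if $\sigma(m)/m<\sigma(N)/N$ for all $0<m<N$), and $N_{15}$ is the product of the first $15$ primes. *)

(* Defs.v *)
From Stdlib Require Import BinNat.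
From HB Require Import structures.
From mathcomp Require Import all_boot all_order all_algebra.
Set Implicit Arguments. Unset Strict Implicit. Unset Printing Implicit Defensive.
Import Order.TTheory GRing.Theory Num.Theory.

Definition sigma (n : nat) : nat := \sum_(d <- divisors n) d.

Definition abund (n : nat) : rat := ((sigma n)%:R / n%:R)%R.

(* large constants, entered as binary numerals to avoid unary nat blowup *)
Definition SA106 : nat := nat_of_bin 224403121196654400%num.
Definition SA107 : nat := nat_of_bin 448806242393308800%num.
Definition N15   : nat := nat_of_bin 614889782588491410%num.
Definition n1    : nat := nat_of_bin 497325836165558400%num.
Definition n2    : nat := nat_of_bin 521585633051683200%num.

(* Main.v *)
Require Import Defs.
From Stdlib Require Import BinNat BinPos Pnat Nnat Lia Bool List.
From mathcomp Require Import all_boot all_order all_algebra zify.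
Import Order.TTheory GRing.Theory Num.Theory.

Lemma sigma_mul a b : 0 < a -> 0 < b -> coprime a b ->
  sigma (a * b) = sigma a * sigma b.
Proof.
move=> a0 b0 cab.
have pe: perm_eq (divisors (a * b)) [seq i * j | i <- divisors a, j <- divisors b].
  apply: uniq_perm; first exact: divisors_uniq.
    apply: allpairs_uniq; [exact: divisors_uniq | exact: divisors_uniq|].
    move=> [i j] [i' j'] /allpairsP[[x y] [/= xa yb [-> ->]]]
      /allpairsP[[x' y'] [/= xa' yb' [-> ->]]] /= E.
    rewrite -!dvdn_divisors // in xa yb xa' yb'.
    have ex: forall u v, u %| a -> v %| b -> gcdn a (u * v) = u.
      move=> u v ua vb; rewrite Gauss_gcdl ?(coprime_dvdr vb cab) //.
      exact/gcdn_idPr.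
    have ey: forall u v, u %| a -> v %| b -> gcdn b (u * v) = v.
      move=> u v ua vb; have cb : coprime b u.
        by rewrite coprime_sym (coprime_dvdl ua cab).
      rewrite Gauss_gcdr //; exact/gcdn_idPr.
    have -> : x = x' by rewrite -[x](ex x y) // E ex.
    have -> : y = y' by rewrite -[y](ey x y) // E ey.
    done.
  move=> d; rewrite -dvdn_divisors ?muln_gt0 ?a0 //.
  apply/idP/allpairsP.
    move=> dab; have d0 : 0 < d by apply: dvdn_gt0 dab; rewrite muln_gt0 a0.
    set i := gcdn d a.
    have i0 : 0 < i by rewrite gcdn_gt0 d0.
    have id : i %| d by exact: dvdn_gcdl.
    have ia : i %| a by exact: dvdn_gcdr.
    exists (i, d %/ i); split => /=; rewrite -?dvdn_divisors //; last by rewrite mulnC divnK.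
    have : (d %/ i) %| (a %/ i) * b.
      by rewrite -(dvdn_pmul2l i0) mulnA ![i * (_ %/ i)]mulnC !divnK.
    have cop : coprime (d %/ i) (a %/ i).
      have : gcdn (d %/ i) (a %/ i) * i = 1 * i by rewrite muln_gcdl !divnK // mul1n.
      by move/eqP; rewrite eqn_pmul2r // => /eqP.
    by rewrite Gauss_dvdr.
  move=> [[x y] [/= xa yb ->]]; rewrite -!dvdn_divisors // in xa yb.
  exact: dvdn_mul.
rewrite /sigma (perm_big _ pe) big_allpairs_dep /= big_distrlr /=.
done.
Qed.

Lemma sigma_pexp p k : prime p -> sigma (p ^ k) = \sum_(i < k.+1) p ^ i.
Proof.
move=> pp; have p1 : 1 < p by exact: prime_gt1.
have pe : perm_eq (divisors (p ^ k)) [seq p ^ i | i <- iota 0 k.+1].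
  apply: uniq_perm; first exact: divisors_uniq.
    rewrite map_inj_uniq ?iota_uniq //; exact: expnI.
  move=> d; rewrite -dvdn_divisors ?expn_gt0 ?prime_gt0 //.
  apply/(dvdn_pfactor _ _ pp)/mapP.
    by move=> [m mk ->]; exists m => //; rewrite mem_iota add0n ltnS mk.
  by move=> [m]; rewrite mem_iota add0n ltnS => mk ->; exists m.
by rewrite /sigma (perm_big _ pe) big_map -[iota 0 _]/(index_iota 0 k.+1) big_mkord.
Qed.

Lemma sigma_pexpS p k : prime p -> sigma (p ^ k.+1) = sigma (p ^ k) + p ^ k.+1.
Proof. by move=> pp; rewrite !sigma_pexp // big_ord_recr. Qed.

Lemma sigma_pexp_bound p k : prime p -> sigma (p ^ k) * p.-1 < p ^ k.+1.
Proof.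
move=> pp; rewrite sigma_pexp // mulnC -predn_exp.
by rewrite prednK // expn_gt0 prime_gt0.
Qed.

Lemma sigma1 : sigma 1 = 1.
Proof. by rewrite -(expn0 2) sigma_pexp // big_ord1. Qed.

Lemma sigma_le m : 0 < m -> sigma m <= m * m.
Proof.
move=> m0; rewrite /sigma big_seq.
apply: (@leq_trans (\sum_(d <- divisors m | d \in divisors m) m)).
  apply: leq_sum => d; rewrite -dvdn_divisors // => dm; exact: dvdn_leq.
rewrite -big_seq big_const_seq count_predT iter_addn_0 mulnC.
rewrite leq_mul2r; apply/orP; right.
have {2}-> : m = size (iota 1 m) by rewrite size_iota.
apply: uniq_leq_size; first exact: divisors_uniq.
move=> d; rewrite -dvdn_divisors // mem_iota => dm.
by rewrite add1n ltnS (dvdn_leq m0 dm) andbT (dvdn_gt0 m0 dm).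
Qed.

Local Notation nb := N.to_nat.

Lemma leb_nat x y : N.leb x y = (nb x <= nb y).
Proof. case: (N.leb_spec x y) => h; symmetry; [apply/ssrnat.leP|apply/negbTE/ssrnat.leP]; lia. Qed.
Lemma ltb_nat x y : N.ltb x y = (nb x < nb y).
Proof. case: (N.ltb_spec x y) => h; symmetry; [apply/ssrnat.ltP|apply/negbTE/ssrnat.ltP]; lia. Qed.
Lemma eqb_nat x y : N.eqb x y = (nb x == nb y).
Proof. case: (N.eqb_spec x y) => h; symmetry; [apply/eqP|apply/negbTE/eqP]; lia. Qed.
Lemma nb_mul x y : nb (N.mul x y) = nb x * nb y.
Proof. exact: N2Nat.inj_mul. Qed.
Lemma nb_add x y : nb (N.add x y) = nb x + nb y.
Proof. exact: N2Nat.inj_add. Qed.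
Lemma nb_pred x : nb (N.pred x) = (nb x).-1.
Proof. exact: N2Nat.inj_pred. Qed.
Lemma nob x : nat_of_bin x = nb x.
Proof.
case: x => //= p. elim/Pos.peano_ind: p => // p IH.
by rewrite nat_of_succ_pos IH Pos2Nat.inj_succ.
Qed.

Definition N15N : N := 614889782588491410%num.
Definition SA107N : N := 448806242393308800%num.
Definition SA106N : N := 224403121196654400%num.
Definition TnumN : N := 1437816604247654400%num.
Definition n1N : N := 497325836165558400%num.
Definition n2N : N := 521585633051683200%num.
Arguments N15N : simpl never.
Arguments SA107N : simpl never.
Arguments SA106N : simpl never.
Arguments TnumN : simpl never.
Arguments n1N : simpl never.
Arguments n2N : simpl never.
Lemma nb1 : nb 1%num = 1. Proof. by []. Qed.

Fixpoint Bnd (L : list N) (P : N) : N * N :=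
  match L with
  | nil => (N15N, 1%num)
  | q :: L' => if N.leb N15N (N.mul P q) then (1%num, 1%num)
               else let '(a, b) := Bnd L' (N.mul P q) in (N.mul q a, N.mul (N.pred q) b)
  end.

Lemma fstE (A B : Type) (a : A) (b : B) : (a, b).1 = a. Proof. by []. Qed.
Lemma sndE (A B : Type) (a : A) (b : B) : (a, b).2 = b. Proof. by []. Qed.
Lemma Bnd_nil P : Bnd nil P = (N15N, 1%num). Proof. by []. Qed.
Lemma Bnd_cons q L' P : Bnd (q :: L') P = if N.leb N15N (N.mul P q) then (1%num, 1%num)
  else let '(a, b) := Bnd L' (N.mul P q) in (N.mul q a, N.mul (N.pred q) b).
Proof. by []. Qed.

Definition prune L sg P :=
  N.leb (N.mul (N.mul sg (Bnd L P).1) SA106N) (N.mul (N.mul TnumN P) (Bnd L P).2).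

Definition leaf sg P := negb (N.ltb SA107N P && N.ltb P N15N && N.ltb (N.mul TnumN P) (N.mul sg SA106N))
   || N.eqb P n1N || N.eqb P n2N.

Fixpoint loopc (f : N -> N -> bool) (sg P q : N) (k : nat) (s qa : N) {struct k} : bool :=
  if N.leb N15N (N.mul P qa) then true else
  match k with
  | O => false
  | S k' => if f (N.mul sg s) (N.mul P qa)
            then loopc f sg P q k' (N.add s (N.mul qa q)) (N.mul qa q) else false
  end.

Fixpoint check (L : list N) (sg P : N) {struct L} : bool :=
  if leaf sg P then (if prune L sg P then true else
   match L with
   | nil => false
   | q :: L' => if N.leb N15N (N.mul P q) then true else
       (if check L' sg P then loopc (check L') sg P q 64 (N.add 1 q) q else false)
   end) else false.

Definition primesL : list N :=
  (2 :: 3 :: 5 :: 7 :: 11 :: 13 :: 17 :: 19 :: 23 :: 29 :: 31 :: 37 :: 41 :: 43 :: 47 :: 53 :: 59 :: 61 :: nil)%num.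

Lemma check_ok : check primesL 1 1 = true.
Proof. vm_compute. reflexivity. Qed.

Fixpoint goodL (L : list N) : bool :=
  match L with
  | nil => true
  | q :: L' => (1 < nb q) && (match L' with nil => true | q' :: _ =>
       (nb q < nb q') && all (fun x => ~~ prime x) (iota (nb q).+1 ((nb q' - nb q).-1)) end)
       && goodL L'
  end.

Lemma good_ok : goodL primesL.
Proof. vm_compute. reflexivity. Qed.

Definition lbL (L : list N) : nat := if L is q :: _ then nb q else 0.

Lemma next_lb q L' r : goodL (q :: L') -> prime r -> nb q < r -> lbL L' <= r.
Proof.
case: L' => [//|q' L'] /= /andP[/andP[_ /andP[qq' hall]] _] pr qr.
rewrite leqNgt; apply/negP => rq'.
have : r \in iota (nb q).+1 ((nb q' - nb q).-1) by rewrite mem_iota; lia.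
by move/(allP hall); rewrite pr.
Qed.

Lemma pp_bound p q k : prime p -> 1 < q -> q <= p ->
  sigma (p ^ k) * q.-1 <= q * p ^ k.
Proof.
move=> pp q1 qp; have := sigma_pexp_bound _ k pp; rewrite expnSr.
set s := sigma _; set t := p ^ k => h.
have e1 : s * q.-1 * p <= s * p.-1 * q by nia.
have e2 : s * q.-1 * p < q * t * p by nia.
by rewrite ltn_pmul2r ?prime_gt0 // in e2; apply: ltnW.
Qed.

Lemma Bnd_ok L P m : goodL L -> 0 < m -> 0 < nb P ->
  (forall r, prime r -> r %| m -> lbL L <= r) -> nb P * m < nb N15N ->
  sigma m * nb (Bnd L P).2 <= nb (Bnd L P).1 * m.
Proof.
elim: L P m => [|q L' IH] P m.
  move=> _ m0 P0 _ hm; rewrite Bnd_nil fstE sndE nb1 muln1; apply: leq_trans (sigma_le _ m0) _.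
  rewrite leq_mul2r; apply/orP; right; nia.
move=> gq; have := gq; move=> /andP[/andP[q1 hnext] gL'] m0 P0 hr hm.
rewrite Bnd_cons.
case hq: (N.leb N15N (N.mul P q)).
  rewrite leb_nat nb_mul in hq.
  case: (ltngtP m 1) => [|m1|->]; first by rewrite ltnNge m0.
    have pp := pdiv_prime m1.
    have qm : nb q <= m := leq_trans (hr _ pp (pdiv_dvd m)) (pdiv_leq m0).
    have : nb P * nb q <= nb P * m by rewrite leq_mul2l qm orbT.
    move: hq hm; lia.
  by rewrite fstE sndE sigma1 nb1.
rewrite leb_nat nb_mul in hq.
case E: (Bnd L' (N.mul P q)) => [a b].
have IH' := IH (N.mul P q); rewrite E fstE sndE nb_mul in IH'.
rewrite fstE sndE !nb_mul nb_pred.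
have PQ0 : 0 < nb P * nb q by nia.
have ba : nb b <= nb a.
  have h1 : forall r, prime r -> r %| 1 -> lbL L' <= r.
    move=> r pr; rewrite dvdn1 => /eqP r1; by rewrite r1 in pr.
  have h2 : nb P * nb q * 1 < nb N15N by move: hq; lia.
  by have := IH' 1 gL' (ltnSn 0) PQ0 h1 h2; rewrite sigma1 mul1n muln1.
case: (ltngtP m 1) => [|m1|->]; first by rewrite ltnNge m0.
  2: by rewrite sigma1; nia.
set p := pdiv m; have pp : prime p := pdiv_prime m1.
have qp : nb q <= p := hr _ pp (pdiv_dvd m).
have [m' cpm' em] := pfactor_coprime pp m0.
set k := logn p m in em.
have k0 : 0 < k by rewrite logn_gt0 mem_primes pp m0 pdiv_dvd.
have m'0 : 0 < m' by move: m0; rewrite em muln_gt0 => /andP[].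
have pk0 : 0 < p ^ k by rewrite expn_gt0 prime_gt0.
have ppk : p <= p ^ k by apply: dvdn_leq => //; apply: dvdn_exp.
have hs : sigma m = sigma m' * sigma (p ^ k).
  rewrite em sigma_mul //; apply: coprimeXr; by rewrite coprime_sym.
have h1 : sigma m' * nb b <= nb a * m'.
  apply: IH' => //.
    move=> r pr rm'.
    have rm : r %| m by rewrite em dvdn_mulr.
    have pr' : p <= r := pdiv_min_dvd (prime_gt1 pr) rm.
    have rp : r != p.
      apply/eqP => erp; move: cpm'; rewrite prime_coprime // -erp rm' //.
    apply: (next_lb q L') => //.
    by apply: leq_ltn_trans qp _; rewrite ltn_neqAle eq_sym rp pr'.
  by move: hm; rewrite em; nia.
have h2 := pp_bound _ _ k pp q1 qp.
rewrite hs em.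
have := leq_mul h1 h2; nia.
Qed.

Lemma Bnd_pos L P : goodL L -> 0 < nb (Bnd L P).2.
Proof.
elim: L P => [|q L' IH] P; first by rewrite Bnd_nil.
move=> /andP[/andP[q1 _] gL']; rewrite Bnd_cons.
case: (N.leb N15N (N.mul P q)); first by [].
case E: (Bnd L' (N.mul P q)) => [a b].
have := IH (N.mul P q) gL'; rewrite E !sndE nb_mul nb_pred; nia.
Qed.

Lemma leaf_ok sg P : leaf sg P = true -> nb sg = sigma (nb P) ->
  nb SA107N < nb P < nb N15N -> nb TnumN * nb P < sigma (nb P) * nb SA106N ->
  nb P = nb n1N \/ nb P = nb n2N.
Proof.
rewrite /leaf !ltb_nat !eqb_nat !nb_mul => + hs /andP[h1 h2] h3.
move=> /orP[/orP[h|/eqP->]|/eqP->]; [|by left|by right].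
by move: h; rewrite h1 h2 hs h3.
Qed.

Lemma prune_ok L sg P m : goodL L -> prune L sg P = true -> 0 < m -> 0 < nb P ->
  coprime (nb P) m -> nb sg = sigma (nb P) ->
  (forall r, prime r -> r %| m -> lbL L <= r) -> nb P * m < nb N15N ->
  ~~ (nb TnumN * (nb P * m) < sigma (nb P * m) * nb SA106N).
Proof.
move=> gL hp m0 P0 cop hs hr hm.
have hB := Bnd_ok L P m gL m0 P0 hr hm.
have b0 := Bnd_pos L P gL.
move: hp; rewrite /prune leb_nat !nb_mul sigma_mul // -hs.
set a := nb (Bnd L P).1; set b := nb (Bnd L P).2 => hp.
rewrite -leqNgt.
have e1 := leq_mul (leq_mul (leqnn (nb sg)) hB) (leqnn (nb SA106N)).
have e2 : nb sg * (a * m) * nb SA106N <= nb TnumN * nb P * b * m.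
  by move: hp; nia.
have : nb sg * sigma m * nb SA106N * b <= nb TnumN * (nb P * m) * b.
  move: e1 e2; nia.
by rewrite leq_pmul2r.
Qed.

Lemma loopc_eq f sg P q k s qa : loopc f sg P q k s qa =
  if N.leb N15N (N.mul P qa) then true else
  match k with
  | O => false
  | S k' => if f (N.mul sg s) (N.mul P qa)
            then loopc f sg P q k' (N.add s (N.mul qa q)) (N.mul qa q) else false
  end.
Proof. by case: k. Qed.

Lemma loop_ok f sg P q k : prime (nb q) -> 0 < nb P ->
  forall j s qa, nb s = sigma (nb q ^ j) -> nb qa = nb q ^ j ->
  loopc f sg P q k s qa = true ->
  forall a, j <= a -> nb P * nb q ^ a < nb N15N ->
  exists s' qa', [/\ nb s' = sigma (nb q ^ a), nb qa' = nb q ^ a &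
                    f (N.mul sg s') (N.mul P qa') = true].
Proof.
move=> pq P0; have q1 := prime_gt1 pq.
elim: k => [|k IH] j s qa hs hqa; rewrite loopc_eq leb_nat nb_mul hqa.
  case: ifP => // h _ a ja ha; exfalso.
  have : nb q ^ j <= nb q ^ a by rewrite leq_pexp2l // ltnW.
  move: h ha; nia.
case: ifP => [h _ a ja ha|_].
  exfalso; have : nb q ^ j <= nb q ^ a by rewrite leq_pexp2l // ltnW.
  move: h ha; nia.
case hf: (f _ _) => // hl a ja ha.
case: (ltngtP j a) => [ja'|aj|eja].
- apply: (IH j.+1 _ _ _ _ hl a ja' ha).
    by rewrite nb_add nb_mul hs hqa sigma_pexpS // expnSr.
  by rewrite nb_mul hqa expnSr.
- by rewrite ltnNge ja in aj.
- by exists s, qa; rewrite -eja.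
Qed.

Lemma check_nil sg P : check nil sg P = if leaf sg P then (if prune nil sg P then true else false) else false.
Proof. by []. Qed.
Lemma check_cons q L' sg P : check (q :: L') sg P =
  if leaf sg P then (if prune (q :: L') sg P then true else
    if N.leb N15N (N.mul P q) then true else
       (if check L' sg P then loopc (check L') sg P q 64 (N.add 1 q) q else false))
  else false.
Proof. by []. Qed.

Lemma check_sound L : goodL L -> forall sg P, check L sg P = true -> 0 < nb P ->
  nb sg = sigma (nb P) -> forall m, 0 < m -> coprime (nb P) m ->
  (forall r, prime r -> r %| m -> lbL L <= r) ->
  nb SA107N < nb P * m < nb N15N ->
  nb TnumN * (nb P * m) < sigma (nb P * m) * nb SA106N ->
  nb P * m = nb n1N \/ nb P * m = nb n2N.
Proof.
elim: L => [|q L' IH] gL sg P hc P0 hs m m0 cop hr /andP[hlo hhi] hT.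
  move: hc; rewrite check_nil; case hl: (leaf sg P) => //.
  case hp: (prune _ sg P) => // _.
  by move: (prune_ok _ _ _ _ gL hp m0 P0 cop hs hr hhi); rewrite hT.
have leafcase : m = 1 -> nb P * m = nb n1N \/ nb P * m = nb n2N.
  move=> m1; move: hc hlo hhi hT; rewrite m1 !muln1 check_cons.
  case hl: (leaf sg P) => // _ hlo hhi hT.
  by apply: (leaf_ok _ _ hl hs _ hT); rewrite hlo hhi.
move: hc; rewrite check_cons; case hl: (leaf sg P) => //.
case hp: (prune _ sg P).
  by move: (prune_ok _ _ _ _ gL hp m0 P0 cop hs hr hhi); rewrite hT.
have gq := gL; move: gL => /andP[/andP[q1 hnext] gL'].
case: (ltngtP m 1) => [|m1|m1]; first by rewrite ltnNge m0.
  2: by move=> _; apply: leafcase.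
set p := pdiv m; have pp : prime p := pdiv_prime m1.
have qp : nb q <= p := hr _ pp (pdiv_dvd m).
case hq: (N.leb N15N (N.mul P q)).
  move=> _; exfalso; rewrite leb_nat nb_mul in hq.
  have qm : nb q <= m := leq_trans qp (pdiv_leq m0).
  have : nb P * nb q <= nb P * m by rewrite leq_mul2l qm orbT.
  move: hq hhi; lia.
case hc': (check L' sg P) => // hloop.
have [m' cpm' em] := pfactor_coprime pp m0.
set k := logn p m in em.
have k0 : 0 < k by rewrite logn_gt0 mem_primes pp m0 pdiv_dvd.
have m'0 : 0 < m' by move: m0; rewrite em muln_gt0 => /andP[].
have pk0 : 0 < p ^ k by rewrite expn_gt0 prime_gt0.
have hr' : forall r, prime r -> r %| m' -> lbL L' <= r.
  move=> r pr rm'.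
  have rm : r %| m by rewrite em dvdn_mulr.
  have pr' : p <= r := pdiv_min_dvd (prime_gt1 pr) rm.
  have rp : r != p.
    apply/eqP => erp; move: cpm'; rewrite prime_coprime // -erp rm' //.
  apply: (next_lb q L') => //.
  by apply: leq_ltn_trans qp _; rewrite ltn_neqAle eq_sym rp pr'.
case: (eqVneq p (nb q)) => [epq|npq].
  have pq : prime (nb q) by rewrite -epq.
  have hk : nb P * nb q ^ k < nb N15N.
    apply: leq_ltn_trans hhi; rewrite leq_mul2l em -epq leq_pmull //; by rewrite orbT.
  have e1 : nb (N.add 1 q) = sigma (nb q ^ 1).
    by rewrite nb_add nb1 sigma_pexpS // expn0 sigma1 expn1.
  have e2 : nb q = nb q ^ 1 by rewrite expn1.
  have [s' [qa' [hs' hqa' hc2]]] :=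
    loop_ok (check L') sg P q 64 pq P0 1 (N.add 1 q) q e1 e2 hloop k k0 hk.
  rewrite -epq in hs' hqa'.
  have cPm : coprime (nb P) (p ^ k).
    by apply: coprime_dvdr cop; rewrite em dvdn_mull.
  have hsig : sigma (nb P) * sigma (p ^ k) = sigma (nb P * p ^ k).
    by rewrite sigma_mul.
  have P'0 : 0 < nb (N.mul P qa') by rewrite nb_mul hqa' muln_gt0 P0.
  have hs2 : nb (N.mul sg s') = sigma (nb (N.mul P qa')) by rewrite !nb_mul hs hs' hqa' hsig.
  have eqPm : nb (N.mul P qa') * m' = nb P * m by rewrite nb_mul hqa' em mulnAC mulnA.
  have cop' : coprime (nb (N.mul P qa')) m'.
    rewrite nb_mul hqa' coprimeMl; apply/andP; split.
      by apply: (coprime_dvdr _ cop); rewrite em dvdn_mulr.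
    by apply: coprimeXl.
  have := IH gL' _ _ hc2 P'0 hs2 m' m'0 cop' hr'; rewrite eqPm; apply.
    by rewrite hlo hhi.
  exact: hT.
apply: (IH gL' sg P hc' P0 hs m m0 cop) => //.
- move=> r pr rm.
  have pr' : p <= r := pdiv_min_dvd (prime_gt1 pr) rm.
  apply: (next_lb q L') => //.
  apply: (leq_trans _ pr'); rewrite ltn_neqAle qp andbT eq_sym; exact: npq.
- by rewrite hlo hhi.
Qed.

Fixpoint powN (p : N) (k : nat) : N := match k with O => 1%num | S k' => N.mul p (powN p k') end.
Fixpoint sumpowN (p : N) (k : nat) : N :=
  match k with O => 1%num | S k' => N.add (sumpowN p k') (powN p k) end.
Fixpoint prodN (s : list (N * nat)) : N :=
  match s with nil => 1%num | x :: s' => N.mul (powN x.1 x.2) (prodN s') end.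
Fixpoint sigN (s : list (N * nat)) : N :=
  match s with nil => 1%num | x :: s' => N.mul (sumpowN x.1 x.2) (sigN s') end.

Lemma nb_powN p k : nb (powN p k) = nb p ^ k.
Proof. elim: k => [|k IH] //=; by rewrite nb_mul IH expnS. Qed.

Lemma nb_sumpowN p k : prime (nb p) -> nb (sumpowN p k) = sigma (nb p ^ k).
Proof.
move=> pp; elim: k => [|k IH]; first by rewrite expn0 sigma1.
by rewrite /= -/(sumpowN p k) nb_add IH sigma_pexpS // nb_mul nb_powN -expnS.
Qed.

Lemma coprime_prodN p s : prime p -> all (fun x => prime (nb x.1)) s ->
  p \notin map (fun x => nb x.1) s -> coprime p (nb (prodN s)).
Proof.
move=> pp; elim: s => [|x s IH] /=; first by move=> _ _; apply: coprimen1.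
move=> /andP[px ps]; rewrite inE negb_or => /andP[npx nps].
rewrite nb_mul nb_powN coprimeMr IH // andbT.
apply: coprimeXr; rewrite prime_coprime // dvdn_prime2 //.
Qed.

Lemma prodN_pos s : all (fun x => prime (nb x.1)) s -> 0 < nb (prodN s).
Proof.
elim: s => [|x s IH] /=; first by [].
move=> /andP[px ps]; rewrite nb_mul nb_powN muln_gt0 expn_gt0 prime_gt0 //; exact: IH.
Qed.

Lemma sigma_prodN s : all (fun x => prime (nb x.1)) s -> uniq (map (fun x => nb x.1) s) ->
  sigma (nb (prodN s)) = nb (sigN s).
Proof.
elim: s => [|x s IH] /=; first by move=> _ _; apply: sigma1.
move=> /andP[px ps] /andP[nx us].
have cop : coprime (nb x.1 ^ x.2) (nb (prodN s)).
  by apply: coprimeXl; apply: coprime_prodN.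
have e0 : 0 < nb x.1 ^ x.2 by rewrite expn_gt0 prime_gt0.
by rewrite !nb_mul nb_powN sigma_mul ?prodN_pos // IH // nb_sumpowN.
Qed.

Definition sSA106 : list (N * nat) :=
  (2%num, 6) :: (3%num, 4) :: (5%num, 2) :: (7%num, 2) :: (11%num, 1) :: (13%num, 1) :: (17%num, 1) :: (19%num, 1) :: (23%num, 1)
   :: (29%num, 1) :: (31%num, 1) :: (37%num, 1) :: nil.
Definition sn1 : list (N * nat) :=
  (2%num, 7) :: (3%num, 4) :: (5%num, 2) :: (7%num, 2) :: (11%num, 1) :: (13%num, 1) :: (17%num, 1) :: (19%num, 1) :: (23%num, 1)
   :: (29%num, 1) :: (31%num, 1) :: (41%num, 1) :: nil.
Definition sn2 : list (N * nat) :=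
  (2%num, 7) :: (3%num, 4) :: (5%num, 2) :: (7%num, 2) :: (11%num, 1) :: (13%num, 1) :: (17%num, 1) :: (19%num, 1) :: (23%num, 1)
   :: (29%num, 1) :: (31%num, 1) :: (43%num, 1) :: nil.

Lemma sigSA106 : sigma (nb SA106N) = nb TnumN.
Proof.
have -> : SA106N = prodN sSA106 by vm_compute; reflexivity.
have -> : TnumN = sigN sSA106 by vm_compute; reflexivity.
by apply: sigma_prodN; vm_compute; reflexivity.
Qed.

Lemma n1_ok : nb TnumN * nb n1N < sigma (nb n1N) * nb SA106N.
Proof.
have -> : n1N = prodN sn1 by vm_compute; reflexivity.
have h : N.ltb (N.mul TnumN (prodN sn1)) (N.mul (sigN sn1) SA106N) = true.
  by vm_compute; reflexivity.
have c1 : all (fun x => prime (nb x.1)) sn1 by vm_compute; reflexivity.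
have c2 : uniq (map (fun x => nb x.1) sn1) by vm_compute; reflexivity.
rewrite (sigma_prodN _ c1 c2).
by move: h; rewrite ltb_nat !nb_mul.
Qed.

Lemma n2_ok : nb TnumN * nb n2N < sigma (nb n2N) * nb SA106N.
Proof.
have -> : n2N = prodN sn2 by vm_compute; reflexivity.
have h : N.ltb (N.mul TnumN (prodN sn2)) (N.mul (sigN sn2) SA106N) = true.
  by vm_compute; reflexivity.
have c1 : all (fun x => prime (nb x.1)) sn2 by vm_compute; reflexivity.
have c2 : uniq (map (fun x => nb x.1) sn2) by vm_compute; reflexivity.
rewrite (sigma_prodN _ c1 c2).
by move: h; rewrite ltb_nat !nb_mul.
Qed.

Lemma rat_lt a b c d : 0 < b -> 0 < d ->
  (((a%:R / b%:R : rat) < c%:R / d%:R)%R) = (a * d < c * b).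
Proof.
move=> b0 d0.
by rewrite ltr_pdivrMr ?ltr0n // mulrAC ltr_pdivlMr ?ltr0n // -!natrM ltr_nat.
Qed.

Theorem proposition6p1 (n : nat) :
  (SA107 < n < N15)%N ->
  ((abund SA106 < abund n)%R <-> (n = n1 \/ n = n2)).
Proof.
rewrite /SA107 /N15 /n1 /n2 /abund /SA106 !nob.
rewrite -[nb 448806242393308800%num]/(nb SA107N) -[nb 614889782588491410%num]/(nb N15N).
rewrite -[nb 497325836165558400%num]/(nb n1N) -[nb 521585633051683200%num]/(nb n2N).
rewrite -[nb 224403121196654400%num]/(nb SA106N).
move=> /andP[hlo hhi].
have n0 : 0 < n := leq_ltn_trans (leq0n _) hlo.
have S0 : 0 < nb SA106N.
  have h : N.ltb 0 SA106N = true by vm_compute; reflexivity.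
  rewrite ltb_nat in h; exact: h.
rewrite (rat_lt _ _ _ _ S0 n0) sigSA106.
split.
  move=> hT.
  have hr : forall r, prime r -> r %| n -> lbL primesL <= r.
    by move=> r pr _; exact: prime_gt1.
  have hrange : nb SA107N < nb 1%num * n < nb N15N by rewrite nb1 mul1n hlo hhi.
  have hT' : nb TnumN * (nb 1%num * n) < sigma (nb 1%num * n) * nb SA106N.
    by rewrite nb1 mul1n.
  have hs : nb 1%num = sigma (nb 1%num) by rewrite nb1 sigma1.
  have P0 : 0 < nb 1%num by rewrite nb1.
  have := check_sound primesL good_ok 1%num 1%num check_ok P0 hs n n0 (coprime1n n) hr hrange hT'.
  by rewrite nb1 mul1n.
by move=> [->|->]; [exact: n1_ok | exact: n2_ok].
Qed.
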